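(* Let $p_s\in(0,1)$, $p_f=1-p_s$, and let $p_{-1},p_0,p_1\in[0,1]$ with $p_{-1}+p_0+p_1=1$. Let $(h(t))$ be i.i.d. with $\mathbb{P}[h(t)=1]=p_s$, $\mathbb{P}[h(t)=0]=p_f$, and let $(\delta(t))$ be i.i.d., independent of $(h(t))$, with $\mathbb{P}[\delta(t)=k]=p_k$ for $k\in\{-1,0,1\}$. Define $$\Delta(t)=\begin{cases}\max\{1,\delta(t)+1\}, & h(t)=1,\\ \max\{1,\ \Delta(t-1)+\delta(t)-\delta(t-1)+1\}, & h(t)=0,\end{cases}$$ and $F=1-p_s(1-p_{-1})$. Then in steady state $$\mathbb{P}[\Delta(t)=i]=\begin{cases} p_0p_s+p_{-1}p_s\big(1+p_f(1-p_{-1})\big), & i=1,\\ p_{-1}p_sp_fF+p_0p_sp_f(1-p_{-1})+p_1p_s, & i=2,\\ \big(p_{-1}p_sp_f^2+p_0p_sp_f\big)F+p_1p_sp_f(1-p_{-1}), & i=3,\\ \big(p_{-1}p_sp_f^{\,i-1}+p_0p_sp_f^{\,i-2}+p_1p_sp_f^{\,i-3}\big)F, & i\ge4,\end{cases}$$ and the average AoI is $$\bar\Delta=\sum_{i=1}^\infty i\,\mathbb{P}[\Delta(t)=i]=p_1+\frac{1}{p_s}.$$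
   Context: Model: $h(t)=1$ means successful decoding at the receiver in slot $t$; $\delta(t)\in\{-1,0,1\}$ is the random clock drift (in slots) of the receiver's clock relative to the transmitter's clock; $\Delta(t)$ is the age of information at the receiver. ''Steady state'' refers to the stationary distribution of the Markov chain $(\delta(t),\Delta(t))$, i.e. the limit as $t\to\infty$. *)

(* Defs.v *)
From Stdlib Require Import Reals Lra ZArith List.
Import ListNotations.
From Coquelicot Require Import Coquelicot.
Open Scope R_scope.

Definition deltas : list Z := [(-1)%Z; 0%Z; 1%Z].

Definition pdelta (pm p0 p1 : R) (d : Z) : R :=
  if Z.eqb d (-1) then pm else if Z.eqb d 0 then p0 else if Z.eqb d 1 then p1 else 0.

Definition ind (b : bool) : R := if b then 1 else 0.

Definition aoi_succ (d' : Z) : nat := Z.to_nat (Z.max 1 (d' + 1)).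
Definition aoi_fail (d : Z) (a : nat) (d' : Z) : nat :=
  Z.to_nat (Z.max 1 (Z.of_nat a + d' - d + 1)).

(* One-step transition probability of the Markov chain (delta, Delta):
   from (d, a) to (d', a'), with h(t) ~ Bernoulli(ps) and delta(t) ~ pdelta,
   independent of each other and of the past. *)
Definition trans (ps pm p0 p1 : R) (d : Z) (a : nat) (d' : Z) (a' : nat) : R :=
  pdelta pm p0 p1 d' *
  (ps * ind (Nat.eqb a' (aoi_succ d')) + (1 - ps) * ind (Nat.eqb a' (aoi_fail d a d'))).

Definition sumD (f : Z -> R) : R := f (-1)%Z + f 0%Z + f 1%Z.

(* pi : Z -> nat -> R is a stationary distribution of the chain on the state space
   {-1,0,1} x {1,2,...}  (values of pi at d outside {-1,0,1} are irrelevant). *)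
Definition stationary (ps pm p0 p1 : R) (pi : Z -> nat -> R) : Prop :=
  (forall d a, In d deltas -> 0 <= pi d a) /\
  (forall d, In d deltas -> pi d 0%nat = 0) /\
  is_series (fun a => sumD (fun d => pi d a)) 1 /\
  (forall d' a', In d' deltas ->
     is_series (fun a => sumD (fun d => pi d a * trans ps pm p0 p1 d a d' a'))
               (pi d' a')).

Definition marg (pi : Z -> nat -> R) (i : nat) : R := sumD (fun d => pi d i).

Definition aoi_pmf (ps pm p0 p1 : R) (i : nat) : R :=
  let pf := 1 - ps in
  let F := 1 - ps * (1 - pm) in
  match i with
  | 0%nat => 0
  | 1%nat => p0 * ps + pm * ps * (1 + pf * (1 - pm))
  | 2%nat => pm * ps * pf * F + p0 * ps * pf * (1 - pm) + p1 * ps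
  | 3%nat => (pm * ps * pf ^ 2 + p0 * ps * pf) * F + p1 * ps * pf * (1 - pm)
  | _ => (pm * ps * pf ^ (i - 1) + p0 * ps * pf ^ (i - 2) + p1 * ps * pf ^ (i - 3)) * F
  end.

(* Main.v *)
Require Import Defs.
From Stdlib Require Import Reals Lra Lia ZArith List.
From Coquelicot Require Import Coquelicot.
Open Scope R_scope.

Lemma sum_const_after (f : nat -> R) (N : nat) :
  (forall n, (N < n)%nat -> f n = 0) ->
  forall n, (N <= n)%nat -> sum_f_R0 f n = sum_f_R0 f N.
Proof.
  intros H n Hn. induction Hn as [|m Hm IH]; [reflexivity|].
  simpl. rewrite IH, (H (S m)) by lia. ring.
Qed.

Lemma finite_series (f : nat -> R) (N : nat) :
  (forall n, (N < n)%nat -> f n = 0) -> is_series f (sum_f_R0 f N).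
Proof.
  intros H. apply is_series_Reals. intros eps Heps. exists N. intros n Hn.
  rewrite (sum_const_after f N H n) by lia. unfold R_dist.
  replace (sum_f_R0 f N - sum_f_R0 f N) with 0 by ring. rewrite Rabs_R0; lra.
Qed.

Lemma single_series (f : nat -> R) (m : nat) :
  (forall n, n <> m -> f n = 0) -> is_series f (f m).
Proof.
  intros H. replace (f m) with (sum_f_R0 f m).
  - apply finite_series. intros n Hn. apply H. lia.
  - destruct m as [|m]; [reflexivity|]. simpl.
    rewrite sum_eq_R0; [ring|]. intros n Hn. apply H. lia.
Qed.

Lemma sumD_series (f : Z -> nat -> R) (l : Z -> R) :
  is_series (f (-1)%Z) (l (-1)%Z) -> is_series (f 0%Z) (l 0%Z) -> is_series (f 1%Z) (l 1%Z) ->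
  is_series (fun a => sumD (fun d => f d a)) (sumD l).
Proof.
  intros H1 H2 H3. unfold sumD.
  apply (is_series_plus _ _ _ _ (is_series_plus _ _ _ _ H1 H2) H3).
Qed.

Lemma ind_true (n m : nat) : n = m -> Defs.ind (Nat.eqb n m) = 1.
Proof. intros ->. rewrite Nat.eqb_refl. reflexivity. Qed.
Lemma ind_false (n m : nat) : n <> m -> Defs.ind (Nat.eqb n m) = 0.
Proof. intros H. apply Nat.eqb_neq in H. rewrite H. reflexivity. Qed.

Definition PZ (pi : Z -> nat -> R) (d : Z) (z : Z) : R :=
  if (z <? 0)%Z then 0 else pi d (Z.to_nat z).

Lemma PZ_nat pi d n : PZ pi d (Z.of_nat n) = pi d n.
Proof. unfold PZ. destruct (Z.ltb_spec (Z.of_nat n) 0); [lia|]. now rewrite Nat2Z.id. Qed.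
Lemma PZ_neg pi d z : (z < 0)%Z -> PZ pi d z = 0.
Proof. intros. unfold PZ. destruct (Z.ltb_spec z 0); [reflexivity|lia]. Qed.
Lemma PZ_ext pi d z1 z2 : z1 = z2 -> PZ pi d z1 = PZ pi d z2.
Proof. intros ->; reflexivity. Qed.

Definition Rf (pi : Z -> nat -> R) (d' : Z) (a' : nat) : R :=
  match a' with
  | O => 0
  | S O => sumD (fun d => pi d 0%nat * Defs.ind (Nat.eqb 1 (aoi_fail d 0 d'))
                        + pi d 1%nat * Defs.ind (Nat.eqb 1 (aoi_fail d 1 d'))
                        + pi d 2%nat * Defs.ind (Nat.eqb 1 (aoi_fail d 2 d')))
  | S (S n) => sumD (fun d => PZ pi d (Z.of_nat a' + d - d' - 1))
  end.

Lemma fail_series (pi : Z -> nat -> R) (d d' : Z) (a' : nat) :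
  In d deltas -> In d' deltas ->
  is_series (fun a => pi d a * Defs.ind (Nat.eqb a' (aoi_fail d a d')))
    (match a' with
     | O => 0
     | S O => pi d 0%nat * Defs.ind (Nat.eqb 1 (aoi_fail d 0 d'))
              + pi d 1%nat * Defs.ind (Nat.eqb 1 (aoi_fail d 1 d'))
              + pi d 2%nat * Defs.ind (Nat.eqb 1 (aoi_fail d 2 d'))
     | S (S n) => PZ pi d (Z.of_nat a' + d - d' - 1)
     end).
Proof.
  intros Hd Hd'.
  assert (Bd : (-1 <= d <= 1)%Z) by (simpl in Hd; lia).
  assert (Bd' : (-1 <= d' <= 1)%Z) by (simpl in Hd'; lia).
  destruct a' as [|[|n]].
  - replace 0 with (sum_f_R0 (fun a => pi d a * Defs.ind (Nat.eqb 0 (aoi_fail d a d'))) 0).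
    + apply finite_series. intros k _. rewrite ind_false; [ring|]. unfold aoi_fail; lia.
    + transitivity (pi d 0%nat * Defs.ind (Nat.eqb 0 (aoi_fail d 0 d'))); [reflexivity|].
      rewrite ind_false; [ring|]. unfold aoi_fail; lia.
  - replace (pi d 0%nat * Defs.ind (Nat.eqb 1 (aoi_fail d 0 d'))
              + pi d 1%nat * Defs.ind (Nat.eqb 1 (aoi_fail d 1 d'))
              + pi d 2%nat * Defs.ind (Nat.eqb 1 (aoi_fail d 2 d')))
      with (sum_f_R0 (fun a => pi d a * Defs.ind (Nat.eqb 1 (aoi_fail d a d'))) 2) by (simpl; ring).
    apply finite_series. intros k Hk. rewrite ind_false; [ring|]. unfold aoi_fail; lia.
  - set (z := (Z.of_nat (S (S n)) + d - d' - 1)%Z).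
    destruct (Z.ltb_spec z 0) as [Hz|Hz].
    + rewrite PZ_neg by exact Hz.
      replace 0 with (sum_f_R0 (fun a => pi d a * Defs.ind (Nat.eqb (S (S n)) (aoi_fail d a d'))) 0).
      * apply finite_series. intros k _. rewrite ind_false; [ring|]. unfold aoi_fail, z in *; lia.
      * transitivity (pi d 0%nat * Defs.ind (Nat.eqb (S (S n)) (aoi_fail d 0 d'))); [reflexivity|].
        rewrite ind_false; [ring|]. unfold aoi_fail, z in *; lia.
    + replace (PZ pi d z) with (pi d (Z.to_nat z) * Defs.ind (Nat.eqb (S (S n)) (aoi_fail d (Z.to_nat z) d'))).
      * apply (single_series (fun a => pi d a * Defs.ind (Nat.eqb (S (S n)) (aoi_fail d a d'))) (Z.to_nat z)). intros k Hk. rewrite ind_false; [ring|]. unfold aoi_fail, z in *; lia.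
      * unfold PZ. destruct (Z.ltb_spec z 0); [lia|]. rewrite ind_true; [ring|].
        unfold aoi_fail, z in *; lia.
Qed.
Lemma plusR (x y : R) : plus x y = x + y.
Proof. reflexivity. Qed.
Lemma oppR (x : R) : opp x = - x.
Proof. reflexivity. Qed.

Lemma is_series_extR (a b : nat -> R) (l : R) :
  (forall n, b n = a n) -> is_series a l -> is_series b l.
Proof. intros H. apply is_series_ext. intros n. symmetry. apply H. Qed.

Lemma is_series_plusR (a b : nat -> R) (la lb : R) :
  is_series a la -> is_series b lb -> is_series (fun n => a n + b n) (la + lb).
Proof. intros Ha Hb. exact (is_series_plus a b la lb Ha Hb). Qed.

Lemma is_series_mul_l (c : R) (a : nat -> R) (l : R) :
  is_series a l -> is_series (fun n => c * a n) (c * l).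
Proof. intros H. apply (is_series_scal c a l H). Qed.

Lemma balance_series ps pm p0 p1 (pi : Z -> nat -> R) d' a' :
  In d' deltas -> is_series (fun a => sumD (fun d => pi d a)) 1 ->
  is_series (fun a => sumD (fun d => pi d a * trans ps pm p0 p1 d a d' a'))
   (pdelta pm p0 p1 d' * (ps * Defs.ind (Nat.eqb a' (aoi_succ d')) + (1 - ps) * Rf pi d' a')).
Proof.
  intros Hd' Htot.
  apply is_series_extR with
    (fun a => pdelta pm p0 p1 d' * ps * Defs.ind (Nat.eqb a' (aoi_succ d')) * sumD (fun d => pi d a)
       + pdelta pm p0 p1 d' * (1 - ps) * sumD (fun d => pi d a * Defs.ind (Nat.eqb a' (aoi_fail d a d')))).
  { intros n. unfold trans, sumD. ring. }
  replace (pdelta pm p0 p1 d' * (ps * Defs.ind (Nat.eqb a' (aoi_succ d')) + (1 - ps) * Rf pi d' a'))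
    with ((pdelta pm p0 p1 d' * ps * Defs.ind (Nat.eqb a' (aoi_succ d')) * 1)
               + (pdelta pm p0 p1 d' * (1 - ps) * Rf pi d' a'))
    by ring.
  apply is_series_plusR.
  - apply is_series_mul_l. exact Htot.
  - apply is_series_mul_l.
    replace (Rf pi d' a') with (sumD (fun d => match a' with
     | O => 0
     | S O => pi d 0%nat * Defs.ind (Nat.eqb 1 (aoi_fail d 0 d'))
              + pi d 1%nat * Defs.ind (Nat.eqb 1 (aoi_fail d 1 d'))
              + pi d 2%nat * Defs.ind (Nat.eqb 1 (aoi_fail d 2 d'))
     | S (S n) => PZ pi d (Z.of_nat a' + d - d' - 1)
     end)).
    + apply (sumD_series (fun d a => pi d a * Defs.ind (Nat.eqb a' (aoi_fail d a d'))));
        apply fail_series; simpl; tauto.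
    + destruct a' as [|[|n]]; unfold Rf, sumD; simpl; ring.
Qed.

Definition EqE ps pm p0 p1 (pi : Z -> nat -> R) : Prop :=
  forall d' a', In d' deltas ->
    pi d' a' = pdelta pm p0 p1 d' * (ps * Defs.ind (Nat.eqb a' (aoi_succ d')) + (1 - ps) * Rf pi d' a').

Lemma stationary_E ps pm p0 p1 pi : stationary ps pm p0 p1 pi -> EqE ps pm p0 p1 pi.
Proof.
  intros (_ & _ & Htot & Hbal) d' a' Hd'.
  pose proof (balance_series ps pm p0 p1 pi d' a' Hd' Htot) as H1.
  pose proof (Hbal d' a' Hd') as H2.
  apply is_series_unique in H1. apply is_series_unique in H2. congruence.
Qed.
Definition Gn (pi : Z -> nat -> R) (b : nat) : R := sumD (fun d => PZ pi d (Z.of_nat b + d)).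

Lemma Gn_S pi b : Gn pi (S b) = pi (-1)%Z b + pi 0%Z (S b) + pi 1%Z (S (S b)).
Proof.
  unfold Gn, sumD.
  rewrite (PZ_ext pi (-1)%Z _ (Z.of_nat b)) by lia.
  rewrite (PZ_ext pi 0%Z _ (Z.of_nat (S b))) by lia.
  rewrite (PZ_ext pi 1%Z _ (Z.of_nat (S (S b)))) by lia.
  rewrite !PZ_nat. reflexivity.
Qed.

Lemma Gn_0 pi : Gn pi 0 = pi 0%Z 0%nat + pi 1%Z 1%nat.
Proof.
  unfold Gn, sumD. rewrite PZ_neg by lia.
  rewrite (PZ_ext pi 0%Z _ (Z.of_nat 0)) by lia.
  rewrite (PZ_ext pi 1%Z _ (Z.of_nat 1)) by lia.
  rewrite !PZ_nat. ring.
Qed.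

Lemma Rf_SS pi d' n :
  Rf pi d' (S (S n)) = Gn pi (Z.to_nat (Z.of_nat (S (S n)) - d' - 1)) \/ (Z.of_nat (S (S n)) - d' - 1 < 0)%Z.
Abort.

Lemma Rf_SS pi d' n b : (Z.of_nat b = Z.of_nat (S (S n)) - d' - 1)%Z ->
  Rf pi d' (S (S n)) = Gn pi b.
Proof.
  intros Hb. unfold Rf, Gn, sumD.
  rewrite (PZ_ext pi (-1)%Z _ (Z.of_nat b + -1)) by lia.
  rewrite (PZ_ext pi 0%Z _ (Z.of_nat b + 0)) by lia.
  rewrite (PZ_ext pi 1%Z _ (Z.of_nat b + 1)) by lia.
  reflexivity.
Qed.

Section Marg.
Variables ps pm p0 p1 : R.
Hypothesis hsum : pm + p0 + p1 = 1.
Variable pi : Z -> nat -> R.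
Hypothesis HE : EqE ps pm p0 p1 pi.

Lemma inm : In (-1)%Z deltas. Proof. simpl; tauto. Qed.
Lemma in0 : In 0%Z deltas. Proof. simpl; tauto. Qed.
Lemma in1 : In 1%Z deltas. Proof. simpl; tauto. Qed.

Lemma E_m0 : pi (-1)%Z 0%nat = 0.
Proof. rewrite (HE _ _ inm). unfold pdelta. simpl. ring. Qed.
Lemma E_00 : pi 0%Z 0%nat = 0.
Proof. rewrite (HE _ _ in0). unfold pdelta. simpl. ring. Qed.
Lemma E_10 : pi 1%Z 0%nat = 0.
Proof. rewrite (HE _ _ in1). unfold pdelta. simpl. ring. Qed.

Lemma E_11 : pi 1%Z 1%nat = 0.
Proof. rewrite (HE _ _ in1). unfold Rf, sumD, pdelta. simpl. rewrite E_10. ring. Qed.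
Lemma E_01 : pi 0%Z 1%nat = p0 * ps.
Proof. rewrite (HE _ _ in0). unfold Rf, sumD, pdelta. simpl. rewrite E_00, E_10, E_11. ring. Qed.

Lemma E_mSS n : pi (-1)%Z (S (S n)) = pm * (1 - ps) * Gn pi (S (S n)).
Proof.
  rewrite (HE _ _ inm). rewrite (Rf_SS pi _ n (S (S n))) by lia.
  rewrite ind_false by (unfold aoi_succ; simpl; lia). unfold pdelta. simpl. ring.
Qed.
Lemma E_0SS n : pi 0%Z (S (S n)) = p0 * (1 - ps) * Gn pi (S n).
Proof.
  rewrite (HE _ _ in0). rewrite (Rf_SS pi _ n (S n)) by lia.
  rewrite ind_false by (unfold aoi_succ; simpl; lia). unfold pdelta. simpl. ring.
Qed.
Lemma E_1SS n : pi 1%Z (S (S n)) = p1 * (ps * Defs.ind (Nat.eqb (S (S n)) 2) + (1 - ps) * Gn pi n).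
Proof.
  rewrite (HE _ _ in1). rewrite (Rf_SS pi _ n n) by lia. reflexivity.
Qed.

Lemma G0 : Gn pi 0 = 0.
Proof. rewrite Gn_0, E_00, E_11. ring. Qed.
Lemma E_12 : pi 1%Z 2%nat = p1 * ps.
Proof. rewrite E_1SS, G0. simpl. ring. Qed.
Lemma G1 : Gn pi 1 = ps * (1 - pm).
Proof. rewrite Gn_S, E_m0, E_01, E_12. replace p0 with (1 - pm - p1) by lra. ring. Qed.

Lemma E_m1 : pi (-1)%Z 1%nat = pm * (ps + (1 - ps) * Gn pi 1).
Proof.
  rewrite (HE _ _ inm). unfold Rf, sumD, pdelta. simpl.
  rewrite E_m0, E_00, E_10, E_11, E_01, E_12, G1.
  replace p0 with (1 - pm - p1) by lra. ring.
Qed.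

Lemma G2 : Gn pi 2 = ps * (1 - ps * (1 - pm)).
Proof.
  rewrite Gn_S, E_m1, E_0SS, E_1SS, G1. simpl.
  replace p0 with (1 - pm - p1) by lra. ring.
Qed.

Lemma GSSS n : Gn pi (S (S (S n))) = (1 - ps) * Gn pi (S (S n)).
Proof.
  rewrite Gn_S, E_mSS, E_0SS, E_1SS.
  rewrite ind_false by lia. replace p0 with (1 - pm - p1) by lra. ring.
Qed.

Lemma Gclosed n : Gn pi (S (S n)) = ps * (1 - ps * (1 - pm)) * (1 - ps) ^ n.
Proof.
  induction n as [|n IH].
  - rewrite G2. ring.
  - rewrite GSSS, IH. simpl. ring.
Qed.

Lemma marg_E i : marg pi i = aoi_pmf ps pm p0 p1 i.
Proof.
  unfold marg, sumD.
  destruct i as [|[|i]].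
  - rewrite E_m0, E_00, E_10. simpl. ring.
  - rewrite E_m1, E_01, E_11, G1. simpl. ring.
  - rewrite E_mSS, E_0SS, E_1SS.
    destruct i as [|[|i]].
    + rewrite G2, G1, G0. simpl. ring.
    + rewrite G2, G1, Gclosed. simpl. ring.
    + rewrite !Gclosed. rewrite ind_false by lia. simpl.
      replace (i - 0)%nat with i by lia. ring.
Qed.

End Marg.
Lemma geom_series (q : R) : 0 <= q < 1 -> is_series (fun k => q ^ k) (/ (1 - q)).
Proof. intros Hq. apply is_series_geom. rewrite Rabs_pos_eq; lra. Qed.

Lemma geom1_series (q : R) : 0 <= q < 1 ->
  is_series (fun k => INR (S k) * q ^ k) (/ (1 - q) * / (1 - q)).
Proof.
  intros Hq.
  pose proof (is_series_mult_pos (fun k => q ^ k) (fun k => q ^ k) _ _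
                (geom_series q Hq) (geom_series q Hq)
                (fun n => pow_le q n (proj1 Hq)) (fun n => pow_le q n (proj1 Hq))) as H.
  apply is_series_extR with (2 := H). intros n.
  rewrite (sum_eq _ (fun _ => q ^ n)).
  - rewrite sum_cte. ring.
  - intros i Hi. rewrite <- pow_add. f_equal. lia.
Qed.

Lemma decr_nR (a : nat -> R) (n : nat) (l : R) : (0 < n)%nat ->
  is_series (fun k => a (n + k)%nat) (l - sum_f_R0 a (pred n)) -> is_series a l.
Proof.
  intros Hn H. apply (is_series_decr_n a n l Hn).
  rewrite sum_n_Reals. exact H.
Qed.

Section Ser.
Variables ps pm p0 p1 : R.
Hypothesis hps : 0 < ps < 1.
Hypothesis hsum : pm + p0 + p1 = 1.

Let C := (pm * ps * (1 - ps) ^ 3 + p0 * ps * (1 - ps) ^ 2 + p1 * ps * (1 - ps)) * (1 - ps * (1 - pm)).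

Lemma pmf_tail k : aoi_pmf ps pm p0 p1 (4 + k) = C * (1 - ps) ^ k.
Proof.
  unfold C. change (4 + k)%nat with (S (S (S (S k)))). unfold aoi_pmf.
  replace (S (S (S (S k))) - 1)%nat with (3 + k)%nat by lia.
  replace (S (S (S (S k))) - 2)%nat with (2 + k)%nat by lia.
  replace (S (S (S (S k))) - 3)%nat with (1 + k)%nat by lia.
  rewrite !pow_add. ring.
Qed.

Lemma pmf_total : is_series (aoi_pmf ps pm p0 p1) 1.
Proof.
  apply (decr_nR _ 4); [lia|].
  replace (1 - sum_f_R0 (aoi_pmf ps pm p0 p1) (Init.Nat.pred 4)) with (C * / (1 - (1 - ps))).
  - apply is_series_extR with (fun k => C * (1 - ps) ^ k).
    + intros k. apply pmf_tail.
    + apply is_series_mul_l. apply geom_series. lra.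
  - simpl. unfold C.
    replace p0 with (1 - pm - p1) by lra. field. lra.
Qed.

Lemma pmf_mean : is_series (fun i => INR i * aoi_pmf ps pm p0 p1 i) (p1 + 1 / ps).
Proof.
  apply (decr_nR (fun i => INR i * aoi_pmf ps pm p0 p1 i) 4); [lia|].
  replace (p1 + 1 / ps - sum_f_R0 (fun i => INR i * aoi_pmf ps pm p0 p1 i) (Init.Nat.pred 4))
    with (C * (/ (1 - (1 - ps)) * / (1 - (1 - ps))) + (3 * C) * / (1 - (1 - ps))).
  - apply is_series_extR with (fun k => C * (INR (S k) * (1 - ps) ^ k) + (3 * C) * (1 - ps) ^ k).
    + intros k. rewrite pmf_tail. rewrite S_INR, plus_INR. simpl. ring.
    + apply is_series_plusR; apply is_series_mul_l.
      * apply geom1_series. lra.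
      * apply geom_series. lra.
  - simpl. unfold C.
    replace p0 with (1 - pm - p1) by lra. field. lra.
Qed.
End Ser.
Definition Gc (ps pm : R) (b : Z) : R :=
  if (b <=? 0)%Z then 0 else if (b =? 1)%Z then ps * (1 - pm)
  else ps * (1 - ps * (1 - pm)) * (1 - ps) ^ (Z.to_nat (b - 2)).

Definition pi0 (ps pm p0 p1 : R) (d : Z) (a : nat) : R :=
  match a with
  | O => 0
  | S _ => pdelta pm p0 p1 d * (ps * Defs.ind (Nat.eqb a (aoi_succ d))
                                + (1 - ps) * Gc ps pm (Z.of_nat a - d - 1))
  end.

Lemma Gc_ext ps pm z1 z2 : z1 = z2 -> Gc ps pm z1 = Gc ps pm z2.
Proof. intros ->; reflexivity. Qed.

Lemma Gc_neg ps pm b : (b <= 0)%Z -> Gc ps pm b = 0.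
Proof. intros H. unfold Gc. destruct (Z.leb_spec b 0); [reflexivity|lia]. Qed.

Lemma Gc_S ps pm b : (2 <= b)%Z -> Gc ps pm (b + 1) = (1 - ps) * Gc ps pm b.
Proof.
  intros H. unfold Gc.
  destruct (Z.leb_spec (b + 1) 0); [lia|]. destruct (Z.eqb_spec (b + 1) 1); [lia|].
  destruct (Z.leb_spec b 0); [lia|]. destruct (Z.eqb_spec b 1); [lia|].
  replace (Z.to_nat (b + 1 - 2)) with (S (Z.to_nat (b - 2))) by lia. simpl. ring.
Qed.

Lemma sumD_PZ_shift pi z d' :
  sumD (fun d => PZ pi d (z + d - d' - 1)) = sumD (fun d => PZ pi d ((z - d' - 1) + d)).
Proof. unfold sumD. f_equal; [f_equal|]; apply PZ_ext; lia. Qed.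

Section Exist.
Variables ps pm p0 p1 : R.
Hypothesis hps : 0 < ps < 1.
Hypothesis hpm : 0 <= pm <= 1.
Hypothesis hp0 : 0 <= p0 <= 1.
Hypothesis hp1 : 0 <= p1 <= 1.
Hypothesis hsum : pm + p0 + p1 = 1.

Lemma selfcons b : sumD (fun d => PZ (pi0 ps pm p0 p1) d (b + d)) = Gc ps pm b.
Proof.
  assert (Hc : (b <= -2 \/ b = -1 \/ b = 0 \/ b = 1 \/ b = 2 \/ 3 <= b)%Z) by lia.
  destruct Hc as [Hb|[->|[->|[->|[->|Hb]]]]].
  - unfold sumD. rewrite !PZ_neg by lia. rewrite Gc_neg by lia. ring.
  - unfold sumD, PZ, pi0, Gc, pdelta. simpl. ring.
  - unfold sumD, PZ, pi0, Gc, pdelta. simpl. ring.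
  - unfold sumD, PZ, pi0, Gc, pdelta. simpl. replace p0 with (1 - pm - p1) by lra. ring.
  - unfold sumD, PZ, pi0, Gc, pdelta. simpl. replace p0 with (1 - pm - p1) by lra. ring.
  - set (m := Z.to_nat (b - 3)).
    unfold sumD.
    rewrite (PZ_ext _ (-1)%Z _ (Z.of_nat (S (S m)))) by lia.
    rewrite (PZ_ext _ 0%Z _ (Z.of_nat (S (S (S m))))) by lia.
    rewrite (PZ_ext _ 1%Z _ (Z.of_nat (S (S (S (S m)))))) by lia.
    rewrite !PZ_nat. cbn [pi0].
    rewrite !ind_false by (unfold aoi_succ; lia).
    rewrite (Gc_ext _ _ (Z.of_nat (S (S m)) - -1 - 1) (b - 1)) by lia.
    rewrite (Gc_ext _ _ (Z.of_nat (S (S (S m))) - 0 - 1) (b - 1)) by lia.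
    rewrite (Gc_ext _ _ (Z.of_nat (S (S (S (S m)))) - 1 - 1) (b - 1)) by lia.
    rewrite (Gc_ext _ _ b (b - 1 + 1)) by lia. rewrite Gc_S by lia.
    unfold pdelta; simpl. replace p0 with (1 - pm - p1) by lra. ring.
Qed.

Lemma pi0_E : EqE ps pm p0 p1 (pi0 ps pm p0 p1).
Proof.
  intros d' a' Hd'.
  destruct a' as [|[|n]].
  - simpl in Hd'. destruct Hd' as [<-|[<-|[<-|[]]]]; unfold pi0, pdelta; simpl; ring.
  - simpl in Hd'. destruct Hd' as [<-|[<-|[<-|[]]]]; unfold Rf, sumD, pi0, Gc, pdelta; simpl;
      try (replace p0 with (1 - pm - p1) by lra); ring.
  - unfold Rf. rewrite sumD_PZ_shift, selfcons. reflexivity.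
Qed.

Lemma Gc_nonneg b : 0 <= Gc ps pm b.
Proof.
  unfold Gc. destruct (b <=? 0)%Z; [lra|]. destruct (b =? 1)%Z.
  - apply Rmult_le_pos; lra.
  - apply Rmult_le_pos; [apply Rmult_le_pos|apply pow_le]; try lra.
    assert (ps * (1 - pm) <= 1 * 1) by (apply Rmult_le_compat; lra). lra.
Qed.

Lemma pi0_nonneg d a : In d deltas -> 0 <= pi0 ps pm p0 p1 d a.
Proof.
  intros Hd. destruct a as [|a]; [simpl; lra|]. unfold pi0.
  apply Rmult_le_pos.
  - simpl in Hd. destruct Hd as [<-|[<-|[<-|[]]]]; unfold pdelta; simpl; lra.
  - apply Rplus_le_le_0_compat; apply Rmult_le_pos; try lra.
    + unfold Defs.ind. destruct (Nat.eqb _ _); lra.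
    + apply Gc_nonneg.
Qed.

Lemma pi0_stationary : stationary ps pm p0 p1 (pi0 ps pm p0 p1).
Proof.
  assert (Htot : is_series (fun a => sumD (fun d => pi0 ps pm p0 p1 d a)) 1).
  { apply is_series_extR with (aoi_pmf ps pm p0 p1).
    - intros a. exact (marg_E ps pm p0 p1 hsum _ pi0_E a).
    - apply pmf_total; assumption. }
  split; [|split; [|split]].
  - intros; apply pi0_nonneg; assumption.
  - intros; reflexivity.
  - exact Htot.
  - intros d' a' Hd'. rewrite (pi0_E d' a' Hd').
    apply balance_series; assumption.
Qed.
End Exist.

Theorem mainTheorem4 (ps pm p0 p1 : R)
  (hps : 0 < ps < 1)
  (hpm : 0 <= pm <= 1) (hp0 : 0 <= p0 <= 1) (hp1 : 0 <= p1 <= 1)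
  (hsum : pm + p0 + p1 = 1) :
  (exists pi, stationary ps pm p0 p1 pi) /\
  (forall pi, stationary ps pm p0 p1 pi ->
     (forall i : nat, (1 <= i)%nat -> marg pi i = aoi_pmf ps pm p0 p1 i) /\
     is_series (fun i : nat => INR i * marg pi i) (p1 + 1 / ps)).
Proof.
  split.
  - exists (pi0 ps pm p0 p1). apply pi0_stationary; assumption.
  - intros pi Hst. pose proof (stationary_E ps pm p0 p1 pi Hst) as HE. split.
    + intros i _. apply marg_E; assumption.
    + apply is_series_extR with (fun i => INR i * aoi_pmf ps pm p0 p1 i).
      * intros i. rewrite (marg_E ps pm p0 p1 hsum pi HE i). reflexivity.
      * apply pmf_mean; assumption.
Qed.
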